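(* Let $k\ge1$ and $1\le r\le(2k+1)^2$. Let $\overline{\mathcal{B}}(2k+1,2k+1;r)$ be the subset of $\mathcal{B}(2k+1,2k+1;r)$ consisting of all boards whose board partition $\begin{pmatrix}\lambda_1&\lambda_2&\lambda_3&\lambda_4\\ \delta_1&\delta_2&\delta_3&\delta_4\end{pmatrix}_c$ satisfies: (i) $\lambda_1\ge\lambda_i$ for all $i>1$; (ii) $\lambda_2\ge\lambda_4$; (iii) if $\lambda_1=\lambda_2$ then $\lambda_3\ge\lambda_4$; (iv) if $\lambda_1=\lambda_3$ and $\lambda_2\ne\lambda_4$, then $\delta_1\ge\delta_2$, and if moreover $\delta_1=\delta_2$ then $\delta_3\ge\delta_4$; (v) if $\lambda_2=\lambda_4$ and $\lambda_1\ne\lambda_3$, then $\delta_1\ge\delta_4$, and if moreover $\delta_1=\delta_4$ then $\delta_2\ge\delta_3$; (vi) if $\lambda_1=\lambda_2>\lambda_3=\lambda_4$ then $\delta_2\ge\delta_4$; (vii) if $\lambda_1=\lambda_3>\lambda_2=\lambda_4$ then $\delta_1\ge\delta_i$ for all $i$, and: if $\delta_1=\delta_2$ then $\delta_3\ge\delta_4$; if $\delta_1=\delta_3$ then $\delta_2\ge\delta_4$; if $\delta_1=\delta_4$ then $\delta_2\ge\delta_3$; (viii) if $\lambda_1=\lambda_2=\lambda_3=\lambda_4$ then $\delta_1\ge\delta_i$ for all $i$, $\delta_2\ge\delta_4$, and if $\delta_1=\delta_2$ then $\delta_3\ge\delta_4$. Then: (1) $\overline{\mathcal{B}}(2k+1,2k+1;r)$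 is a disjoint union of sets each consisting of all boards in $\mathcal{B}(2k+1,2k+1;r)$ with some fixed board partition; (2) every board of $\mathcal{B}(2k+1,2k+1;r)$ is equivalent under $D_4$ to some board of $\overline{\mathcal{B}}(2k+1,2k+1;r)$; (3) if two boards of $\overline{\mathcal{B}}(2k+1,2k+1;r)$ are equivalent under $D_4$, they have the same board partition.
   Context: A $(2k+1)\times(2k+1)$ grid has cells $(i,j)$ with rows numbered top to bottom and columns left to right. $\mathcal{B}(2k+1,2k+1;r)$ is the set of boards, i.e. subsets of exactly $r$ blocked cells; the dihedral group $D_4$ of the 8 symmetries of the square (four rotations about the center, reflections across the horizontal midline, vertical midline, and the two diagonals) acts on boards, and two boards are equivalent if some element maps one to the other. The grid is divided into nine regions: $\Lambda_1$ = rows $1..k$, cols $1..k$; $\Lambda_2$ = rows $1..k$, cols $k+2..2k+1$; $\Lambda_3$ = rows $k+2..2k+1$, cols $k+2..2k+1$; $\Lambda_4$ = rows $k+2..2k+1$, cols $1..k$; $\Delta_1$ = rows $1..k$, col $k+1$ (top strip); $\Delta_2$ = row $k+1$, cols $k+2..2k+1$ (right strip); $\Delta_3$ = rows $k+2..2k+1$, col $k+1$ (bottom strip); $\Delta_4$ = row $k+1$, cols $1..k$ (left strip); and the center cell $(k+1,k+1)$. The board partition $\begin{pmatrix}\lambda_1&\lambda_2&\lambda_3&\lambda_4\\ \delta_1&\delta_2&\delta_3&\delta_4\end{pmatrix}_c$ records the numbers $\lambda_i$, $\delta_i$ of blocked cells in $\Lambda_i$, $\Delta_i$, and $c\in\{0,1\}$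 the number of blocked cells at the center. *)

(* Defs.v *)
From mathcomp Require Import all_boot.
Set Implicit Arguments. Unset Strict Implicit. Unset Printing Implicit Defensive.

(* Cells of the (2k+1)x(2k+1) grid, 0-indexed: paper row i+1 = our row i. *)
Definition cell (k : nat) := ('I_(2 * k + 1) * 'I_(2 * k + 1))%type.
Definition board (k : nat) := {set cell k}.

Section Regions.
Variable k : nat.
Implicit Types (x : cell k) (B : board k).

Definition inLam1 x := (x.1 < k) && (x.2 < k).
Definition inLam2 x := (x.1 < k) && (k < x.2).
Definition inLam3 x := (k < x.1) && (k < x.2).
Definition inLam4 x := (k < x.1) && (x.2 < k).
Definition inDel1 x := (x.1 < k) && (x.2 == k :> nat).
Definition inDel2 x := (x.1 == k :> nat) && (k < x.2).
Definition inDel3 x := (k < x.1) && (x.2 == k :> nat).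
Definition inDel4 x := (x.1 == k :> nat) && (x.2 < k).
Definition inCenter x := (x.1 == k :> nat) && (x.2 == k :> nat).

Definition cnt (p : pred (cell k)) B := #|[set x in B | p x]|.

Definition bpart B : (nat * nat * nat * nat) * (nat * nat * nat * nat) * nat :=
  ((cnt inLam1 B, cnt inLam2 B, cnt inLam3 B, cnt inLam4 B),
   (cnt inDel1 B, cnt inDel2 B, cnt inDel3 B, cnt inDel4 B),
   cnt inCenter B).

Definition d4 : seq (cell k -> cell k) :=
  [:: (fun x => x);
      (fun x => (x.2, rev_ord x.1));
      (fun x => (rev_ord x.1, rev_ord x.2));
      (fun x => (rev_ord x.2, x.1));
      (fun x => (rev_ord x.1, x.2));
      (fun x => (x.1, rev_ord x.2));
      (fun x => (x.2, x.1));
      (fun x => (rev_ord x.2, rev_ord x.1))].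

Definition equivB B B' :=
  exists2 i : nat, (i < size d4) & (nth (fun x => x) d4 i) @: B = B'.

Definition bar_conds (p : (nat * nat * nat * nat) * (nat * nat * nat * nat) * nat) : Prop :=
  let: ((l1, l2, l3, l4), (d1, d2, d3, d4), c) := p in
  [/\ (l1 >= l2 /\ l1 >= l3 /\ l1 >= l4),
      l2 >= l4,
      (l1 = l2 -> l3 >= l4),
      (l1 = l3 -> l2 <> l4 -> d1 >= d2 /\ (d1 = d2 -> d3 >= d4)) &
      (l2 = l4 -> l1 <> l3 -> d1 >= d4 /\ (d1 = d4 -> d2 >= d3))] /\
  [/\ (l1 = l2 -> l2 > l3 -> l3 = l4 -> d2 >= d4),
      (l1 = l3 -> l3 > l2 -> l2 = l4 ->
         (d1 >= d2 /\ d1 >= d3 /\ d1 >= d4) /\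
         [/\ (d1 = d2 -> d3 >= d4), (d1 = d3 -> d2 >= d4) & (d1 = d4 -> d2 >= d3)]) &
      (l1 = l2 -> l2 = l3 -> l3 = l4 ->
         [/\ d1 >= d2, d1 >= d3, d1 >= d4, d2 >= d4 & (d1 = d2 -> d3 >= d4)])].

Definition inBbar (r : nat) B := #|B| = r /\ bar_conds (bpart B).

End Regions.

(* Main.v *)
Require Import Defs.
From mathcomp Require Import all_boot.
From mathcomp Require Import zify.
From Stdlib Require Import PropExtensionality.
Set Implicit Arguments. Unset Strict Implicit. Unset Printing Implicit Defensive.

Definition P9 := ((nat * nat * nat * nat) * (nat * nat * nat * nat) * nat)%type.

Definition barb8 (l1 l2 l3 l4 d1 d2 d3 d4 : nat) : bool :=
[&& l2 <= l1, l3 <= l1, l4 <= l1,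
 l4 <= l2,
 (l1 == l2) ==> (l4 <= l3),
 (l1 == l3) ==> (l2 != l4) ==> ((d2 <= d1) && ((d1 == d2) ==> (d4 <= d3))),
 (l2 == l4) ==> (l1 != l3) ==> ((d4 <= d1) && ((d1 == d4) ==> (d3 <= d2))),
 (l1 == l2) ==> ~~ (l2 <= l3) ==> (l3 == l4) ==> (d4 <= d2),
 (l1 == l3) ==> ~~ (l3 <= l2) ==> (l2 == l4) ==>
    [&& d2 <= d1, d3 <= d1, d4 <= d1, (d1 == d2) ==> (d4 <= d3),
        (d1 == d3) ==> (d4 <= d2) & (d1 == d4) ==> (d3 <= d2)] &
 (l1 == l2) ==> (l2 == l3) ==> (l3 == l4) ==>
    [&& d2 <= d1, d3 <= d1, d4 <= d1, d4 <= d2 & (d1 == d2) ==> (d4 <= d3)]].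

Definition barP (p : P9) : bool :=
  let: ((l1, l2, l3, l4), (d1, d2, d3, d4), c) := p in barb8 l1 l2 l3 l4 d1 d2 d3 d4.

Lemma barP_conds (p : P9) : bar_conds p <-> barP p.
Proof.
case: p => [[[[[l1 l2] l3] l4] [[[d1 d2] d3] d4]] c].
have E3 : forall P Q R : Prop, [/\ P, Q & R] = (P /\ Q /\ R).
  by move=> P Q R; apply: propositional_extensionality; split=> [[]|[? []]].
have E5 : forall P Q R S T : Prop, [/\ P, Q, R, S & T] = (P /\ Q /\ R /\ S /\ T).
  by move=> P Q R S T; apply: propositional_extensionality; split=> [[]|[? [? [? []]]]].
rewrite /bar_conds /barP /barb8 !E3 !E5.
split.
- move=> [[[h1 [h2 h3]] [h4 [h5 [h6 h7]]]] [h8 [h9 h10]]].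
  repeat (apply/andP; split); lia.
- move=> H; repeat split; lia.
Qed.

Definition rank (s : seq nat) x := count (fun m => m < x) s.
Arguments rank : simpl never.
Lemma rank_mono s x y : x <= y -> rank s x <= rank s y.
Proof. move=> le; apply: sub_count => m /= h; exact: leq_trans h le. Qed.
Lemma rank_strict s x y : y < x -> y \in s -> rank s y < rank s x.
Proof.
move=> lt; rewrite /rank; elim: s => //= z s IH; rewrite inE; case/orP=> [/eqP<-|ys].
  by rewrite ltnn lt add0n add1n ltnS (rank_mono s) // ltnW.
move: (IH ys).
case: (ltnP z y) => h; first have h2 : z < x by exact: ltn_trans h lt.
  by rewrite h2 /=; lia.
case: (z < x); lia.
Qed.
Lemma rank_le s x y : x \in s -> y \in s -> (rank s x <= rank s y) = (x <= y).
Proof.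
move=> xs ys; case: (leqP x y) => h; first exact: rank_mono.
by apply/negbTE; rewrite -ltnNge rank_strict.
Qed.
Lemma rank_eq s x y : x \in s -> y \in s -> (rank s x == rank s y) = (x == y).
Proof. by move=> xs ys; rewrite !eqn_leq !rank_le. Qed.

Lemma barb8_rank s t a b c d e f g h :
  a \in s -> b \in s -> c \in s -> d \in s ->
  e \in t -> f \in t -> g \in t -> h \in t ->
  barb8 (rank s a) (rank s b) (rank s c) (rank s d)
        (rank t e) (rank t f) (rank t g) (rank t h) = barb8 a b c d e f g h.
Proof. by move=> *; rewrite /barb8 !rank_le ?rank_eq. Qed.

Definition sg (i : nat) (p : P9) : P9 :=
  let: ((l1, l2, l3, l4), (d1, d2, d3, d4), c) := p in
  match i with
  | 1 => ((l4, l1, l2, l3), (d4, d1, d2, d3), c)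
  | 2 => ((l3, l4, l1, l2), (d3, d4, d1, d2), c)
  | 3 => ((l2, l3, l4, l1), (d2, d3, d4, d1), c)
  | 4 => ((l4, l3, l2, l1), (d3, d2, d1, d4), c)
  | 5 => ((l2, l1, l4, l3), (d1, d4, d3, d2), c)
  | 6 => ((l1, l4, l3, l2), (d4, d3, d2, d1), c)
  | 7 => ((l3, l2, l1, l4), (d2, d1, d4, d3), c)
  | _ => p
  end.

Definition normP (p : P9) : P9 :=
  let: ((l1, l2, l3, l4), (d1, d2, d3, d4), c) := p in
  let s := [:: l1; l2; l3; l4] in let t := [:: d1; d2; d3; d4] in
  ((rank s l1, rank s l2, rank s l3, rank s l4),
   (rank t d1, rank t d2, rank t d3, rank t d4), 0).

Lemma L1 i p : barP (sg i (normP p)) = barP (sg i p).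
Proof.
case: p => [[[[[l1 l2] l3] l4] [[[d1 d2] d3] d4]] c].
by case: i => [|[|[|[|[|[|[|[|i]]]]]]]] /=; rewrite barb8_rank // !inE eqxx ?orbT.
Qed.

Lemma L2 i p : (sg i (normP p) == normP p) = (sg i p == p).
Proof.
case: p => [[[[[l1 l2] l3] l4] [[[d1 d2] d3] d4]] c].
case: i => [|[|[|[|[|[|[|[|i]]]]]]]] /=; rewrite ?eqxx //= !xpair_eqE ?eqxx ?andbT /=;
  rewrite !rank_eq //; rewrite ?inE ?eqxx ?orbT //.
Qed.

Definition okq (q : P9) :=
  has (fun i => barP (sg i q)) (iota 0 8) &&
  all (fun i => barP q ==> barP (sg i q) ==> (sg i q == q)) (iota 0 8).

Definition R5 := iota 0 4.

Definition T4 : seq (nat * nat * nat * nat) :=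
  [seq (x, d) | x <- [seq (y, c) | y <- [seq (a, b) | a <- R5, b <- R5], c <- R5], d <- R5].

Definition validr (t : nat * nat * nat * nat) : bool :=
  let: (a, b, c, d) := t in let s := [:: a; b; c; d] in
  [&& rank s a == a, rank s b == b, rank s c == c & rank s d == d].

Definition VL : seq (nat * nat * nat * nat) := [:: (0,0,0,0); (0,0,0,3); (0,0,2,2); (0,0,2,3); (0,0,3,0); (0,0,3,2); (0,1,1,1); (0,1,1,3); (0,1,2,2); (0,1,2,3); (0,1,3,1); (0,1,3,2); (0,2,0,2); (0,2,0,3); (0,2,1,2); (0,2,1,3); (0,2,2,0); (0,2,2,1); (0,2,3,0); (0,2,3,1); (0,3,0,0); (0,3,0,2); (0,3,1,1); (0,3,1,2); (0,3,2,0); (0,3,2,1); (1,0,1,1); (1,0,1,3); (1,0,2,2); (1,0,2,3); (1,0,3,1); (1,0,3,2); (1,1,0,1); (1,1,0,3); (1,1,1,0); (1,1,3,0); (1,2,0,2); (1,2,0,3); (1,2,2,0); (1,2,3,0); (1,3,0,1); (1,3,0,2); (1,3,1,0); (1,3,2,0); (2,0,0,2); (2,0,0,3); (2,0,1,2); (2,0,1,3); (2,0,2,0); (2,0,2,1); (2,0,3,0); (2,0,3,1); (2,1,0,2); (2,1,0,3); (2,1,2,0); (2,1,3,0); (2,2,0,0); (2,2,0,1); (2,2,1,0); (2,3,0,0); (2,3,0,1); (2,3,1,0); (3,0,0,0); (3,0,0,2); (3,0,1,1); (3,0,1,2); (3,0,2,0); (3,0,2,1); (3,1,0,1); (3,1,0,2);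 (3,1,1,0); (3,1,2,0); (3,2,0,0); (3,2,0,1); (3,2,1,0)].

Lemma VL_eq : filter validr T4 = VL.
Proof. by vm_compute. Qed.

Lemma check : all (fun l => all (fun d => okq (l, d, 0)) VL) VL.
Proof. by vm_compute. Qed.

Lemma rank_R5 a b c d x : x \in [:: a; b; c; d] -> rank [:: a; b; c; d] x \in R5.
Proof.
move=> xs; rewrite mem_iota add0n.
have := count_predC (fun m => m < x) [:: a; b; c; d].
have : 0 < count (predC (fun m => m < x)) [:: a; b; c; d].
  by rewrite -has_count; apply/hasP; exists x => //=; rewrite ltnn.
rewrite /rank /=; lia.
Qed.

Lemma rank_idem s x : x \in s -> rank (map (rank s) s) (rank s x) = rank s x.
Proof.
move=> xs; rewrite {1}/rank count_map; apply: eq_in_count => m ms /=.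
by rewrite !ltnNge rank_le.
Qed.

Lemma inVL a b c d :
  (rank [:: a; b; c; d] a, rank [:: a; b; c; d] b,
   rank [:: a; b; c; d] c, rank [:: a; b; c; d] d) \in VL.
Proof.
have M : [/\ a \in [:: a; b; c; d], b \in [:: a; b; c; d],
   c \in [:: a; b; c; d] & d \in [:: a; b; c; d]].
  by rewrite !inE !eqxx ?orbT.
case: M => m1 m2 m3 m4.
rewrite -VL_eq mem_filter; apply/andP; split.
  have := rank_idem m1; have := rank_idem m2; have := rank_idem m3; have := rank_idem m4.
  by rewrite /validr /= => -> -> -> ->; rewrite !eqxx.
by rewrite !allpairs_f // rank_R5.
Qed.

Lemma okq_norm p : okq (normP p).
Proof.
case: p => [[[[[l1 l2] l3] l4] [[[d1 d2] d3] d4]] c] /=.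
by move: check => /allP/(_ _ (inVL l1 l2 l3 l4))/allP/(_ _ (inVL d1 d2 d3 d4)).
Qed.

Lemma comb2 p : exists2 i, i < 8 & barP (sg i p).
Proof.
have /andP[/hasP[i hi hb] _] := okq_norm p.
by exists i; [rewrite mem_iota in hi | rewrite -L1].
Qed.

Lemma comb3 p i : i < 8 -> barP p -> barP (sg i p) -> sg i p = p.
Proof.
move=> hi b0 b1; have /andP[_ /allP/(_ i)] := okq_norm p.
have E0 : forall q, sg 0 q = q by case=> [[[[[? ?] ?] ?] [[[? ?] ?] ?]] ?].
rewrite mem_iota hi => /(_ isT); rewrite -{1}(E0 (normP p)) !L1 E0.
by rewrite b0 b1 L2 => /eqP.
Qed.

Lemma cnt_img k (f : cell k -> cell k) (P Q : pred (cell k)) (B : board k) :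
  injective f -> (forall x, P (f x) = Q x) -> cnt P (f @: B) = cnt Q B.
Proof.
move=> finj PQ; rewrite /cnt -[RHS](card_imset _ finj); apply: eq_card => y; rewrite !inE; apply/andP/imsetP.
  by case=> /imsetP[x xB ->] Py; exists x => //; rewrite inE xB -PQ.
by case=> x; rewrite inE -PQ => /andP[xB Px] ->; rewrite imset_f.
Qed.

Lemma g_inj k i : injective (nth (fun x => x) (d4 k) i).
Proof.
apply: (@can_inj _ _ _ (fun x => nth (fun x => x) (d4 k) i (nth (fun x => x) (d4 k) i (nth (fun x => x) (d4 k) i x)))).
by case: i => [|[|[|[|[|[|[|[|i]]]]]]]] [a b] /=; rewrite ?rev_ordK //; case: i.
Qed.

Lemma bpart_img k i (B : board k) : i < 8 ->
  bpart (nth (fun x => x) (d4 k) i @: B) = sg i (bpart B).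
Proof.
rewrite /bpart => hi; have fi := @g_inj k i; move: hi fi.
case: i => [|[|[|[|[|[|[|[|i]]]]]]]] //= _ fi;
congr ((_, _, _, _), (_, _, _, _), _); apply: cnt_img; try exact: fi;
case=> [[a ha] [b hb]];
rewrite /inLam1 /inLam2 /inLam3 /inLam4 /inDel1 /inDel2 /inDel3 /inDel4 /inCenter /=; lia.
Qed.

Theorem theorem4p3 (k r : nat) (hk : 1 <= k) (hr1 : 1 <= r)
    (hr2 : r <= (2 * k + 1) ^ 2) :
  (* (1) Bbar is a (disjoint) union of full fibres of the board-partition map *)
  (exists P : ((nat * nat * nat * nat) * (nat * nat * nat * nat) * nat) -> Prop,
     forall B : board k, inBbar r B <-> (#|B| = r /\ P (bpart B)))
  (* (2) every board with r blocked cells is equivalent to one in Bbar *)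
  /\ (forall B : board k, #|B| = r -> exists B', inBbar r B' /\ equivB B B')
  (* (3) equivalent boards of Bbar have the same board partition *)
  /\ (forall B B' : board k, inBbar r B -> inBbar r B' -> equivB B B' ->
        bpart B = bpart B').
Proof.
split; first by exists bar_conds.
split.
  move=> B hB; have [i hi hb] := comb2 (bpart B).
  exists (nth (fun x => x) (d4 k) i @: B); split; last by exists i.
  split; first by rewrite (card_imset _ (@g_inj k i)).
  by rewrite bpart_img // barP_conds.
move=> B B' [_ hb] [_ hb'] [i hi E]; move: hb'; rewrite -E.
rewrite bpart_img // => hb'; symmetry; apply: comb3 => //; exact/barP_conds.
Qed.
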